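(* Let $\overline u,P^l\in\mathbb{R}^n$ be constant and let $(\overline\eta,\overline\omega,\overline V)$ with $\overline\eta\in\mathcal{R}(D^T)\cap(-\frac{\pi}{2},\frac{\pi}{2})^m$, $\overline V\in\mathbb{R}^n_{>0}$ be an equilibrium of the network dynamics with $u=\overline u$, i.e. $D^T\overline\omega=\mathbf{0}$, $\mathbf{0}=\overline u-D\Gamma(\overline V)\boldsymbol{\sin}(\overline\eta)-A\overline\omega-P^l$, $\mathbf{0}=-E(\overline\eta)\overline V+\overline E_{fd}$, and suppose $(\overline\eta,\overline V)$ satisfies condition $(\ast)$. Then the network dynamics with input $u$ and output $y=\omega$ is output strictly incrementally passive with respect to $(\overline\eta,\overline\omega,\overline V)$: the function $U=W_1(\omega,\overline\omega)+W_2(\eta,\overline\eta,V,\overline V)$, with $W_1=\frac12(\omega-\overline\omega)^TM(\omega-\overline\omega)$, satisfies along solutions \[ \dot U=-(y-\overline y)^TA(y-\overline y)-(\nabla_VW_2)^TT^{-1}\nabla_VW_2+(y-\overline y)^T(u-\overline u), \] where $\overline y=\overline\omega$.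
   Context: Standing setup (power network model). $\mathcal{G}=(\mathcal{V},\mathcal{E})$ is a connected undirected graph with node set $\{1,\dots,n\}$ and $m$ edges; each edge $k=\{i,j\}$ is given an arbitrary orientation, and $D\in\mathbb{R}^{n\times m}$ is the incidence matrix: $d_{ik}=+1$ if $i$ is the positive end of edge $k$, $-1$ if $i$ is the negative end, $0$ otherwise. $|D|$ denotes the matrix of entrywise absolute values of $D$. $\mathbf{1}_n$ is the all-ones vector. For each edge $k=\{i,j\}$ there is a susceptance $B_{ij}=B_{ji}>0$; each node has a self-susceptance $B_{ii}<0$ with $|B_{ii}|>\sum_{j\in\mathcal{N}_i}|B_{ij}|$ ($\mathcal{N}_i$ the neighbours of $i$ in $\mathcal{G}$), and reactances $X_{di}>X'_{di}>0$. For $V\in\mathbb{R}^n$, $\Gamma(V)=\mathrm{diag}(\gamma_1,\dots,\gamma_m)$ with $\gamma_k=V_iV_jB_{ij}$ for edge $k=\{i,j\}$. For $\eta\in\mathbb{R}^m$, $E(\eta)\in\mathbb{R}^{n\times n}$ is the symmetric matrix with $E_{ii}=\frac{1-B_{ii}(X_{di}-X'_{di})}{X_{di}-X'_{di}}$, $E_{ij}=-B_{ij}\cos(\eta_k)$ if $k=\{i,j\}$ is an edge, and $E_{ij}=0$ otherwise. $\boldsymbol{\sin}$, $\boldsymbol{\cos}$ act componentwise. $M,A,T$ are diagonal positive definite $n\times n$ matrices ($A=\mathrm{diag}(A_i)$), and $\overline E_{fd}\in\mathbb{R}^n$ is a constant vector. The network dynamics, with input $u\in\mathbb{R}^n$ (power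 generation) and demand $P^l$, are \[ \dot\eta=D^T\omega,\quad M\dot\omega=u-D\Gamma(V)\boldsymbol{\sin}(\eta)-A\omega-P^l,\quad T\dot V=-E(\eta)V+\overline E_{fd},\quad y=\omega, \] with state $(\eta,\omega,V)\in\mathbb{R}^m\times\mathbb{R}^n\times\mathbb{R}^n$. Condition $(\ast)$ on $(\overline\eta,\overline V)$: \[ E(\overline\eta)-\mathrm{diag}(\overline V)^{-1}|D|\Gamma(\overline V)\mathrm{diag}(\boldsymbol{\sin}(\overline\eta))\mathrm{diag}(\boldsymbol{\cos}(\overline\eta))^{-1}\mathrm{diag}(\boldsymbol{\sin}(\overline\eta))|D|^T\mathrm{diag}(\overline V)^{-1}>0. \] Storage function: $W_2(\eta,\overline\eta,V,\overline V)=-\mathbf{1}_m^T\Gamma(V)\boldsymbol{\cos}(\eta)+\mathbf{1}_m^T\Gamma(\overline V)\boldsymbol{\cos}(\overline\eta)-(\Gamma(\overline V)\boldsymbol{\sin}(\overline\eta))^T(\eta-\overline\eta)-\overline E_{fd}^T(V-\overline V)+\tfrac12V^TFV-\tfrac12\overline V^TF\overline V$, where $F$ is diagonal with $F_{ii}=\frac{1-B_{ii}(X_{di}-X'_{di})}{X_{di}-X'_{di}}$; note $\nabla_VW_2=E(\eta)V-\overline E_{fd}$. *)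

(* Defs.v *)
From Stdlib Require Import Reals Lra Lia Arith.
Open Scope R_scope.

(* Vectors in R^n are functions nat -> R, only indices < n matter. *)

Fixpoint rsum (n : nat) (f : nat -> R) : R :=
  match n with
  | O => 0
  | S p => rsum p f + f p
  end.

(* ---- graph: m edges, edge k oriented from src k (positive end) to dst k
   (negative end), nodes 0..n-1. ---- *)

Definition inc (src dst : nat -> nat) (i k : nat) : R :=
  if Nat.eqb i (src k) then 1 else if Nat.eqb i (dst k) then -1 else 0.

Definition absinc (src dst : nat -> nat) (i k : nat) : R := Rabs (inc src dst i k).

Definition joins (src dst : nat -> nat) (k i j : nat) : bool :=
  (Nat.eqb (src k) i && Nat.eqb (dst k) j) || (Nat.eqb (src k) j && Nat.eqb (dst k) i).

Definition adjacent (m : nat) (src dst : nat -> nat) (i j : nat) : Prop :=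
  exists k, (k < m)%nat /\ joins src dst k i j = true.

Inductive reach (m : nat) (src dst : nat -> nat) (i : nat) : nat -> Prop :=
  | reach_refl : reach m src dst i i
  | reach_step : forall j l, reach m src dst i j -> adjacent m src dst j l ->
                 reach m src dst i l.

Definition simple_connected_graph (n m : nat) (src dst : nat -> nat) : Prop :=
  (forall k, (k < m)%nat -> (src k < n)%nat /\ (dst k < n)%nat /\ src k <> dst k) /\
  (forall k1 k2, (k1 < m)%nat -> (k2 < m)%nat ->
     joins src dst k1 (src k2) (dst k2) = true -> k1 = k2) /\
  (forall i j, (i < n)%nat -> (j < n)%nat -> reach m src dst i j).

Definition Fdiag (B : nat -> nat -> R) (Xd Xd' : nat -> R) (i : nat) : R :=
  (1 - B i i * (Xd i - Xd' i)) / (Xd i - Xd' i).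

(* Gamma(V) = diag(gamma_k), gamma_k = V_i V_j B_ij for edge k = {i,j} *)
Definition gam (src dst : nat -> nat) (B : nat -> nat -> R) (V : nat -> R) (k : nat) : R :=
  V (src k) * V (dst k) * B (src k) (dst k).

Definition Emat (m : nat) (src dst : nat -> nat) (B : nat -> nat -> R)
  (Xd Xd' : nat -> R) (eta : nat -> R) (i j : nat) : R :=
  if Nat.eqb i j then Fdiag B Xd Xd' i
  else rsum m (fun k => if joins src dst k i j then - B i j * cos (eta k) else 0).

Definition DT (n : nat) (src dst : nat -> nat) (w : nat -> R) (k : nat) : R :=
  rsum n (fun i => inc src dst i k * w i).

Definition flow (m : nat) (src dst : nat -> nat) (B : nat -> nat -> R)
  (V eta : nat -> R) (i : nat) : R :=
  rsum m (fun k => inc src dst i k * gam src dst B V k * sin (eta k)).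

Definition EV (n m : nat) (src dst : nat -> nat) (B : nat -> nat -> R)
  (Xd Xd' : nat -> R) (eta V : nat -> R) (i : nat) : R :=
  rsum n (fun j => Emat m src dst B Xd Xd' eta i j * V j).

(* Condition (ast): the symmetric n x n matrix
   E(etab) - diag(Vb)^-1 |D| Gamma(Vb) diag(sin etab) diag(cos etab)^-1 diag(sin etab) |D|^T diag(Vb)^-1
   is positive definite. *)
Definition condQ (n m : nat) (src dst : nat -> nat) (B : nat -> nat -> R)
  (Xd Xd' : nat -> R) (etab Vb : nat -> R) (i j : nat) : R :=
  Emat m src dst B Xd Xd' etab i j
  - / Vb i * rsum m (fun k => absinc src dst i k * gam src dst B Vb k * sin (etab k)
                              * / cos (etab k) * sin (etab k) * absinc src dst j k) * / Vb j.

Definition pos_def (n : nat) (Q : nat -> nat -> R) : Prop :=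
  forall x : nat -> R, (exists i, (i < n)%nat /\ x i <> 0) ->
    rsum n (fun i => rsum n (fun j => x i * Q i j * x j)) > 0.

Definition W2 (n m : nat) (src dst : nat -> nat) (B : nat -> nat -> R)
  (Xd Xd' Efd : nat -> R) (eta etab V Vb : nat -> R) : R :=
  - rsum m (fun k => gam src dst B V k * cos (eta k))
  + rsum m (fun k => gam src dst B Vb k * cos (etab k))
  - rsum m (fun k => gam src dst B Vb k * sin (etab k) * (eta k - etab k))
  - rsum n (fun i => Efd i * (V i - Vb i))
  + / 2 * rsum n (fun i => Fdiag B Xd Xd' i * V i * V i)
  - / 2 * rsum n (fun i => Fdiag B Xd Xd' i * Vb i * Vb i).

Definition W1 (n : nat) (Mi : nat -> R) (w wb : nat -> R) : R :=
  / 2 * rsum n (fun i => Mi i * (w i - wb i) * (w i - wb i)).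

Definition gradVW2 (n m : nat) (src dst : nat -> nat) (B : nat -> nat -> R)
  (Xd Xd' Efd : nat -> R) (eta V : nat -> R) (i : nat) : R :=
  EV n m src dst B Xd Xd' eta V i - Efd i.

(* Main.v *)
Require Import Defs.
From Stdlib Require Import Reals Lra Psatz Lia Arith.
Open Scope R_scope.

Lemma Rabs_le_inv2 x y : Rabs x <= y -> -y <= x <= y.
Proof. unfold Rabs; destruct (Rcase_abs x); lra. Qed.
Lemma cos_bd d : Rabs d <= 1 ->
  let x := d * d in
  1 - x/2 + x*x/24 - x*x*x/720 <= cos d <= 1 - x/2 + x*x/24 - x*x*x/720 + x*x*x*x/40320.
Proof. intro H. assert (HP := PI2_1). apply Rabs_le_inv2 in H.
 destruct (COS d) as [H1 H2]; try lra.
 unfold cos_lb, cos_ub, cos_approx, cos_term in *; cbn [sum_f_R0] in *.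
 replace (INR (Factorial.fact (2*0))) with 1 in * by (cbn [Nat.mul Nat.add]; cbn [Factorial.fact]; rewrite ?mult_INR; cbn [INR]; lra).
 replace (INR (Factorial.fact (2*1))) with 2 in * by (cbn [Nat.mul Nat.add]; cbn [Factorial.fact]; rewrite ?mult_INR; cbn [INR]; lra).
 replace (INR (Factorial.fact (2*2))) with 24 in * by (cbn [Nat.mul Nat.add]; cbn [Factorial.fact]; rewrite ?mult_INR; cbn [INR]; lra).
 replace (INR (Factorial.fact (2*3))) with 720 in * by (cbn [Nat.mul Nat.add]; cbn [Factorial.fact]; rewrite ?mult_INR; cbn [INR]; lra).
 replace (INR (Factorial.fact (2*4))) with 40320 in * by (cbn [Nat.mul Nat.add]; cbn [Factorial.fact]; rewrite ?mult_INR; cbn [INR]; lra).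
 cbn [pow Nat.mul Nat.add] in H1, H2. cbv zeta.
 split; [eapply Rle_trans; [|apply H1]|eapply Rle_trans; [apply H2|]]; right; field.
Qed.
Lemma sin_bd0 d : 0 <= d <= 1 -> let x := d * d in
  d - d*x/6 + d*x*x/120 - d*x*x*x/5040 <= sin d <= d - d*x/6 + d*x*x/120 - d*x*x*x/5040 + d*x*x*x*x/362880.
Proof. intro H. assert (HP := PI2_1). assert (HP2 := PI2_Rlt_PI).
 destruct (SIN d) as [H1 H2]; try lra.
 unfold sin_lb, sin_ub, sin_approx, sin_term in *; cbn [sum_f_R0] in *.
 replace (INR (Factorial.fact (2*0+1))) with 1 in * by (cbn [Nat.mul Nat.add]; cbn [Factorial.fact]; rewrite ?mult_INR; cbn [INR]; lra).
 replace (INR (Factorial.fact (2*1+1))) with 6 in * by (cbn [Nat.mul Nat.add]; cbn [Factorial.fact]; rewrite ?mult_INR; cbn [INR]; lra).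
 replace (INR (Factorial.fact (2*2+1))) with 120 in * by (cbn [Nat.mul Nat.add]; cbn [Factorial.fact]; rewrite ?mult_INR; cbn [INR]; lra).
 replace (INR (Factorial.fact (2*3+1))) with 5040 in * by (cbn [Nat.mul Nat.add]; cbn [Factorial.fact]; rewrite ?mult_INR; cbn [INR]; lra).
 replace (INR (Factorial.fact (2*4+1))) with 362880 in * by (cbn [Nat.mul Nat.add]; cbn [Factorial.fact]; rewrite ?mult_INR; cbn [INR]; lra).
 cbn [pow Nat.mul Nat.add] in H1, H2. cbv zeta.
 split; [eapply Rle_trans; [|apply H1]|eapply Rle_trans; [apply H2|]]; right; field.
Qed.
Lemma sin_bd d : Rabs d <= 1 -> Rabs (sin d - d) <= Rabs d * (d * d) / 6 /\ Rabs (sin d) <= Rabs d.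
Proof. intro H.
 assert (G: forall e, 0 <= e <= 1 -> -(e*(e*e)/6) <= sin e - e <= 0 /\ 0 <= sin e <= e).
 { intros e He. pose proof (sin_bd0 e He) as [A B']. cbv zeta in *.
   set (x := e*e) in *. assert (0 <= x <= 1) by (unfold x; nra).
   assert (0 <= x*x <= x) by nra. assert (0 <= x*x*x <= x*x) by nra.
   assert (0 <= x*x*x*x <= x*x*x) by nra.
   assert (0 <= e*(x*x) <= e*x) by nra. assert (0 <= e*(x*x*x) <= e*(x*x)) by nra.
   assert (0 <= e*(x*x*x*x) <= e*(x*x*x)) by nra. assert (0 <= e*x <= e) by nra.
   replace (e*x*x) with (e*(x*x)) in * by ring.
   replace (e*x*x*x) with (e*(x*x*x)) in * by ring.
   replace (e*x*x*x*x) with (e*(x*x*x*x)) in * by ring. lra. }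
 destruct (Rle_dec 0 d).
 - rewrite (Rabs_right d) in * by lra. destruct (G d) as [[A1 A2] [B1 B2]]. lra.
   split; apply Rabs_le; lra.
 - rewrite (Rabs_left d) in * by lra. destruct (G (-d)) as [[A1 A2] [B1 B2]]. lra.
   rewrite sin_neg in *. split; apply Rabs_le; nra.
Qed.
Lemma trig_bounds d : Rabs d <= 1 ->
  Rabs (1 - cos d - d*d/2) + Rabs (sin d - d) <= Rabs d * (d*d) /\
  Rabs (1 - cos d) <= d*d /\ Rabs (sin d) <= Rabs d.
Proof. intro H. pose proof (cos_bd d H) as [C1 C2]. pose proof (sin_bd d H) as [S S2].
 cbv zeta in *.
 assert (Ha: 0 <= Rabs d) by apply Rabs_pos.
 assert (Hdd: d * d = Rabs d * Rabs d). { rewrite <- Rabs_mult. rewrite Rabs_right; nra. }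
 set (x := d*d) in *.
 assert (0 <= x <= 1) by (rewrite Hdd; nra).
 assert (0 <= x*x <= x) by nra. assert (0 <= x*x*x <= x*x) by nra.
 assert (0 <= x*x*x*x <= x*x*x) by nra.
 assert (E1: Rabs (1 - cos d - x/2) <= x*x/24).
 { apply Rabs_le. split; lra. }
 split; [|split]; auto.
 - assert (x*x/24 <= Rabs d * x * 5/6). { rewrite Hdd. nra. } lra.
 - apply Rabs_le. split; lra.
Qed.

Lemma rsum_ext n f g : (forall i, (i < n)%nat -> f i = g i) -> rsum n f = rsum n g.
Proof. induction n; simpl; intros H; auto. rewrite IHn by (intros; apply H; lia). rewrite H by lia. auto. Qed.
Lemma rsum_plus n f g : rsum n (fun i => f i + g i) = rsum n f + rsum n g.
Proof. induction n; simpl; [lra|rewrite IHn; lra]. Qed.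
Lemma rsum_minus n f g : rsum n (fun i => f i - g i) = rsum n f - rsum n g.
Proof. induction n; simpl; [lra|rewrite IHn; lra]. Qed.
Lemma rsum_scal n c f : rsum n (fun i => c * f i) = c * rsum n f.
Proof. induction n; simpl; [lra|rewrite IHn; lra]. Qed.
Lemma rsum_zero n f : (forall i, (i < n)%nat -> f i = 0) -> rsum n f = 0.
Proof. intros H. rewrite (rsum_ext n f (fun _ => 0)) by auto. induction n; simpl; [lra|]. rewrite IHn; [lra|intros; apply H; lia]. Qed.
Lemma rsum_swap n m f : rsum n (fun i => rsum m (fun k => f i k)) = rsum m (fun k => rsum n (fun i => f i k)).
Proof. induction n; simpl. - rewrite rsum_zero; auto. - rewrite IHn, <- rsum_plus. auto. Qed.
Lemma rsum_ind n a f : (a < n)%nat -> rsum n (fun i => if Nat.eqb i a then f i else 0) = f a.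
Proof. induction n; intros H; simpl; [lia|]. destruct (Nat.eqb_spec n a).
 - subst. rewrite rsum_zero; [lra|]. intros i Hi. destruct (Nat.eqb_spec i a); [lia|auto].
 - rewrite IHn by lia. lra. Qed.
Lemma rsum_if_const n (b : bool) f : rsum n (fun j => if b then f j else 0) = if b then rsum n f else 0.
Proof. destruct b; auto. apply rsum_zero; auto. Qed.
Lemma rsum_nonneg n f : (forall i, (i < n)%nat -> 0 <= f i) -> 0 <= rsum n f.
Proof. induction n; simpl; intros H; [lra|]. specialize (H n) as H'. assert (0 <= rsum n f) by (apply IHn; intros; apply H; lia). assert (0 <= f n) by (apply H; lia). lra. Qed.
Lemma rsum_le n f g : (forall i, (i < n)%nat -> f i <= g i) -> rsum n f <= rsum n g.
Proof. induction n; simpl; intros H; [lra|]. assert (rsum n f <= rsum n g) by (apply IHn; intros; apply H; lia). assert (f n <= g n) by (apply H; lia). lra. Qed.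
Lemma term_le_rsum n f j : (forall i, (i < n)%nat -> 0 <= f i) -> (j < n)%nat -> f j <= rsum n f.
Proof. induction n; simpl; intros H Hj; [lia|]. assert (0 <= rsum n f) by (apply rsum_nonneg; intros; apply H; lia).
 destruct (Nat.eq_dec j n). - subst; lra. - assert (f j <= rsum n f) by (apply IHn; [intros; apply H; lia|lia]). assert (0 <= f n) by (apply H; lia). lra. Qed.
Lemma rsum_pos n f j : (forall i, (i < n)%nat -> 0 <= f i) -> (j < n)%nat -> 0 < f j -> 0 < rsum n f.
Proof. intros. pose proof (term_le_rsum n f j H H0). lra. Qed.

Section G.
Variables (n m : nat) (src dst : nat -> nat).
Hypothesis Hedge : forall k, (k < m)%nat -> (src k < n)%nat /\ (dst k < n)%nat /\ src k <> dst k.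

Lemma joins_split k i j (G : R) : (k < m)%nat ->
  (if joins src dst k i j then G else 0) =
  (if Nat.eqb i (src k) then (if Nat.eqb j (dst k) then G else 0) else 0) +
  (if Nat.eqb i (dst k) then (if Nat.eqb j (src k) then G else 0) else 0).
Proof. intros Hk. destruct (Hedge k Hk) as [_ [_ Hne]]. unfold joins.
 destruct (Nat.eqb_spec (src k) i), (Nat.eqb_spec (dst k) j), (Nat.eqb_spec (src k) j), (Nat.eqb_spec (dst k) i),
  (Nat.eqb_spec i (src k)), (Nat.eqb_spec j (dst k)), (Nat.eqb_spec i (dst k)), (Nat.eqb_spec j (src k)); simpl;
  try lra; try lia. Qed.

Lemma rsum2_joins k (G : nat -> nat -> R) : (k < m)%nat ->
  rsum n (fun i => rsum n (fun j => if joins src dst k i j then G i j else 0)) = G (src k) (dst k) + G (dst k) (src k).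
Proof. intros Hk. destruct (Hedge k Hk) as [Hs [Hd Hne]].
 rewrite (rsum_ext n _ (fun i => rsum n (fun j => if Nat.eqb i (src k) then (if Nat.eqb j (dst k) then G i j else 0) else 0)
   + rsum n (fun j => if Nat.eqb i (dst k) then (if Nat.eqb j (src k) then G i j else 0) else 0))).
 2:{ intros i Hi. rewrite <- rsum_plus. apply rsum_ext. intros j Hj. apply joins_split; auto. }
 rewrite rsum_plus. f_equal.
 - rewrite (rsum_ext n _ (fun i => if Nat.eqb i (src k) then rsum n (fun j => if Nat.eqb j (dst k) then G i j else 0) else 0)) by (intros; apply rsum_if_const).
   rewrite (rsum_ind n (src k) (fun i => rsum n (fun j => if Nat.eqb j (dst k) then G i j else 0))) by auto.
   apply rsum_ind; auto.
 - rewrite (rsum_ext n _ (fun i => if Nat.eqb i (dst k) then rsum n (fun j => if Nat.eqb j (src k) then G i j else 0) else 0)) by (intros; apply rsum_if_const).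
   rewrite (rsum_ind n (dst k) (fun i => rsum n (fun j => if Nat.eqb j (src k) then G i j else 0))) by auto.
   apply rsum_ind; auto.
Qed.

Lemma absinc_sum k y : (k < m)%nat -> rsum n (fun i => absinc src dst i k * y i) = y (src k) + y (dst k).
Proof. intros Hk. destruct (Hedge k Hk) as [Hs [Hd Hne]].
 rewrite (rsum_ext n _ (fun i => (if Nat.eqb i (src k) then y i else 0) + (if Nat.eqb i (dst k) then y i else 0))).
 - rewrite rsum_plus, !rsum_ind; auto.
 - intros i Hi. unfold absinc, inc. destruct (Nat.eqb_spec i (src k)), (Nat.eqb_spec i (dst k)); try lia;
   try rewrite Rabs_R1; try rewrite Rabs_R0; try (replace (Rabs (-1)) with 1 by (unfold Rabs; destruct Rcase_abs; lra)); lra.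
Qed.

Lemma inc_sum k y : (k < m)%nat -> rsum n (fun i => inc src dst i k * y i) = y (src k) - y (dst k).
Proof. intros Hk. destruct (Hedge k Hk) as [Hs [Hd Hne]].
 rewrite (rsum_ext n _ (fun i => (if Nat.eqb i (src k) then y i else 0) - (if Nat.eqb i (dst k) then y i else 0))).
 - rewrite rsum_minus, !rsum_ind; auto.
 - intros i Hi. unfold inc. destruct (Nat.eqb_spec i (src k)), (Nat.eqb_spec i (dst k)); try lia; lra.
Qed.

Lemma Emat_split B Xd Xd' eta i j :
  Emat m src dst B Xd Xd' eta i j = (if Nat.eqb i j then Fdiag B Xd Xd' i else 0) +
     rsum m (fun k => if joins src dst k i j then - B i j * cos (eta k) else 0).
Proof. unfold Emat. destruct (Nat.eqb_spec i j).
 - subst. rewrite rsum_zero; [lra|]. intros k Hk. destruct (Hedge k Hk) as [_ [_ Hne]].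
   unfold joins. destruct (Nat.eqb_spec (src k) j), (Nat.eqb_spec (dst k) j); simpl; try lia; auto.
 - lra.
Qed.

Lemma EV_bil B Xd Xd' eta x y : (forall k, (k < m)%nat -> B (src k) (dst k) = B (dst k) (src k)) ->
  rsum n (fun i => x i * EV n m src dst B Xd Xd' eta y i) =
  rsum n (fun i => Fdiag B Xd Xd' i * x i * y i) -
  rsum m (fun k => B (src k) (dst k) * cos (eta k) * (x (src k) * y (dst k) + x (dst k) * y (src k))).
Proof. intros HB. unfold EV.
 rewrite (rsum_ext n _ (fun i => rsum n (fun j => if Nat.eqb j i then Fdiag B Xd Xd' i * x i * y i else 0)
   + rsum n (fun j => rsum m (fun k => if joins src dst k i j then x i * (- B i j * cos (eta k)) * y j else 0)))).
 2:{ intros i Hi. rewrite <- rsum_scal, <- rsum_plus. apply rsum_ext. intros j Hj.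
     assert (E: rsum m (fun k => if joins src dst k i j then x i * (- B i j * cos (eta k)) * y j else 0) = x i * y j * rsum m (fun k => if joins src dst k i j then - B i j * cos (eta k) else 0)).
     { rewrite <- rsum_scal; apply rsum_ext; intros k Hk; destruct (joins src dst k i j); ring. }
     rewrite E, Emat_split, Nat.eqb_sym. destruct (Nat.eqb_spec j i); [subst|]; ring. }
 rewrite rsum_plus. rewrite (rsum_ext n _ (fun i => Fdiag B Xd Xd' i * x i * y i)) by (intros; apply rsum_ind; auto).
 rewrite (rsum_ext n (fun i => rsum n _) (fun i => rsum m (fun k => rsum n (fun j => if joins src dst k i j then x i * (- B i j * cos (eta k)) * y j else 0)))) by (intros; apply rsum_swap).
 rewrite rsum_swap.
 rewrite (rsum_ext m _ (fun k => - (B (src k) (dst k) * cos (eta k) * (x (src k) * y (dst k) + x (dst k) * y (src k))))).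
 - rewrite (rsum_ext m (fun k => - _) (fun k => (-1) * (B (src k) (dst k) * cos (eta k) * (x (src k) * y (dst k) + x (dst k) * y (src k))))) by (intros; ring).
   rewrite rsum_scal. ring.
 - intros k Hk. rewrite (rsum2_joins k (fun i j => x i * (- B i j * cos (eta k)) * y j)) by auto.
   rewrite <- (HB k Hk). ring.
Qed.
End G.

Lemma Dext_val f x l l' : derivable_pt_lim f x l -> l = l' -> derivable_pt_lim f x l'.
Proof. intros; subst; auto. Qed.
Lemma Dconst c x : derivable_pt_lim (fun _ => c) x 0.
Proof. apply (derivable_pt_lim_const c x). Qed.
Lemma Dplus f g x a b : derivable_pt_lim f x a -> derivable_pt_lim g x b -> derivable_pt_lim (fun s => f s + g s) x (a + b).
Proof. intros. apply (derivable_pt_lim_plus f g x a b); auto. Qed.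
Lemma Dminus f g x a b : derivable_pt_lim f x a -> derivable_pt_lim g x b -> derivable_pt_lim (fun s => f s - g s) x (a - b).
Proof. intros. apply (derivable_pt_lim_minus f g x a b); auto. Qed.
Lemma Dmult f g x a b : derivable_pt_lim f x a -> derivable_pt_lim g x b -> derivable_pt_lim (fun s => f s * g s) x (a * g x + f x * b).
Proof. intros. apply (derivable_pt_lim_mult f g x a b); auto. Qed.
Lemma Dopp f x a : derivable_pt_lim f x a -> derivable_pt_lim (fun s => - f s) x (- a).
Proof. intros. apply (derivable_pt_lim_opp f x a); auto. Qed.
Lemma Dcos f x a : derivable_pt_lim f x a -> derivable_pt_lim (fun s => cos (f s)) x (- sin (f x) * a).
Proof. intros. apply (derivable_pt_lim_comp f cos x a (- sin (f x))); auto. apply derivable_pt_lim_cos. Qed.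
Lemma D_rsum n (f : nat -> R -> R) d t : (forall i, (i < n)%nat -> derivable_pt_lim (f i) t (d i)) ->
  derivable_pt_lim (fun s => rsum n (fun i => f i s)) t (rsum n d).
Proof. induction n; intros H; simpl. - apply Dconst. - apply Dplus; [apply IHn; intros; apply H; lia| apply H; lia]. Qed.

Ltac dtac := repeat first [ eassumption | apply Dconst | apply Dplus | apply Dminus | apply Dopp | apply Dcos | apply Dmult ].

Lemma part2 (n m : nat) (src dst : nat -> nat)
  (B : nat -> nat -> R) (Xd Xd' : nat -> R)
  (Mi Ai Ti : nat -> R) (Efd : nat -> R)
  (ub Pl : nat -> R)
  (etab wb Vb : nat -> R)
  (Hedge : forall k, (k < m)%nat -> (src k < n)%nat /\ (dst k < n)%nat /\ src k <> dst k)
  (HBs : forall k, (k < m)%nat -> B (src k) (dst k) = B (dst k) (src k))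
  (HM : forall i, (i < n)%nat -> Mi i > 0)
  (HT : forall i, (i < n)%nat -> Ti i > 0)
  (Heq1 : forall k, (k < m)%nat -> DT n src dst wb k = 0)
  (Heq2 : forall i, (i < n)%nat ->
     0 = ub i - flow m src dst B Vb etab i - Ai i * wb i - Pl i)
  (u : R -> nat -> R) (eta w V : R -> nat -> R) (t : R)
  (He : forall k, (k < m)%nat ->
           derivable_pt_lim (fun s => eta s k) t (DT n src dst (w t) k))
  (Hw : forall i, (i < n)%nat ->
           derivable_pt_lim (fun s => w s i) t
             (/ Mi i * (u t i - flow m src dst B (V t) (eta t) i - Ai i * w t i - Pl i)))
  (HV : forall i, (i < n)%nat ->
           derivable_pt_lim (fun s => V s i) t
             (/ Ti i * (- EV n m src dst B Xd Xd' (eta t) (V t) i + Efd i))) :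
  derivable_pt_lim (fun s => W1 n Mi (w s) wb + W2 n m src dst B Xd Xd' Efd (eta s) etab (V s) Vb) t
         (- rsum n (fun i => Ai i * (w t i - wb i) * (w t i - wb i))
          - rsum n (fun i => gradVW2 n m src dst B Xd Xd' Efd (eta t) (V t) i * / Ti i
                             * gradVW2 n m src dst B Xd Xd' Efd (eta t) (V t) i)
          + rsum n (fun i => (w t i - wb i) * (u t i - ub i))).
Proof.
 set (Vd := fun i => / Ti i * (- EV n m src dst B Xd Xd' (eta t) (V t) i + Efd i)).
 set (F := Fdiag B Xd Xd').
 assert (P1 : derivable_pt_lim (fun s => rsum n (fun i => Mi i * (w s i - wb i) * (w s i - wb i))) t
   (rsum n (fun i => 2 * (w t i - wb i) * (u t i - flow m src dst B (V t) (eta t) i - Ai i * w t i - Pl i)))).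
 { apply (D_rsum n (fun i s => Mi i * (w s i - wb i) * (w s i - wb i))). intros i Hi.
   pose proof (Hw i Hi). pose proof (HM i Hi). eapply Dext_val; [dtac|]. cbv beta. field. lra. }
 assert (P2 : derivable_pt_lim (fun s => rsum m (fun k => gam src dst B (V s) k * cos (eta s k))) t
   (rsum m (fun k => B (src k) (dst k) * cos (eta t k) * (Vd (src k) * V t (dst k) + Vd (dst k) * V t (src k))
       - gam src dst B (V t) k * sin (eta t k) * DT n src dst (w t) k))).
 { apply (D_rsum m (fun k s => gam src dst B (V s) k * cos (eta s k))). intros k Hk.
   destruct (Hedge k Hk) as [Hs [Hd _]]. pose proof (HV _ Hs). pose proof (HV _ Hd). pose proof (He k Hk).
   unfold gam. eapply Dext_val; [dtac|]. cbv beta. unfold Vd. ring. }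
 assert (P3 : derivable_pt_lim (fun s => rsum m (fun k => gam src dst B Vb k * sin (etab k) * (eta s k - etab k))) t
   (rsum m (fun k => gam src dst B Vb k * sin (etab k) * DT n src dst (w t) k))).
 { apply (D_rsum m (fun k s => gam src dst B Vb k * sin (etab k) * (eta s k - etab k))). intros k Hk.
   pose proof (He k Hk). eapply Dext_val; [dtac|]. cbv beta. ring. }
 assert (P4 : derivable_pt_lim (fun s => rsum n (fun i => Efd i * (V s i - Vb i))) t (rsum n (fun i => Efd i * Vd i))).
 { apply (D_rsum n (fun i s => Efd i * (V s i - Vb i))). intros i Hi.
   pose proof (HV i Hi). eapply Dext_val; [dtac|]. cbv beta. unfold Vd. ring. }
 assert (P5 : derivable_pt_lim (fun s => rsum n (fun i => F i * V s i * V s i)) t (rsum n (fun i => 2 * (F i * Vd i * V t i)))).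
 { apply (D_rsum n (fun i s => F i * V s i * V s i)). intros i Hi.
   pose proof (HV i Hi). eapply Dext_val; [dtac|]. cbv beta. unfold Vd. ring. }
 unfold W1, W2. fold F.
 eapply Dext_val; [repeat first [apply P1 | apply P2 | apply P3 | apply P4 | apply P5 | apply Dconst | apply Dplus | apply Dminus | apply Dopp | apply Dmult] |].
 cbv beta.
 set (flw := fun i => flow m src dst B (V t) (eta t) i - flow m src dst B Vb etab i).
 assert (E1 : rsum n (fun i => 2 * (w t i - wb i) * (u t i - flow m src dst B (V t) (eta t) i - Ai i * w t i - Pl i))
   = 2 * rsum n (fun i => (w t i - wb i) * (u t i - ub i)) - 2 * rsum n (fun i => Ai i * (w t i - wb i) * (w t i - wb i))
     - 2 * rsum n (fun i => (w t i - wb i) * flw i)).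
 { rewrite <- !rsum_scal, <- !rsum_minus. apply rsum_ext. intros i Hi. pose proof (Heq2 i Hi). unfold flw. nra. }
 assert (E2 : rsum m (fun k => B (src k) (dst k) * cos (eta t k) * (Vd (src k) * V t (dst k) + Vd (dst k) * V t (src k))
       - gam src dst B (V t) k * sin (eta t k) * DT n src dst (w t) k) =
   rsum m (fun k => B (src k) (dst k) * cos (eta t k) * (Vd (src k) * V t (dst k) + Vd (dst k) * V t (src k)))
   - rsum m (fun k => gam src dst B (V t) k * sin (eta t k) * DT n src dst (w t) k)) by apply rsum_minus.
 assert (K1 : rsum m (fun k => gam src dst B (V t) k * sin (eta t k) * DT n src dst (w t) k)
   - rsum m (fun k => gam src dst B Vb k * sin (etab k) * DT n src dst (w t) k) = rsum n (fun i => (w t i - wb i) * flw i)).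
 { rewrite <- rsum_minus. unfold flw, flow.
   rewrite (rsum_ext n _ (fun i => rsum m (fun k => (w t i - wb i) * (inc src dst i k * (gam src dst B (V t) k * sin (eta t k) - gam src dst B Vb k * sin (etab k)))))).
   2:{ intros i Hi. rewrite <- rsum_minus, <- rsum_scal. apply rsum_ext. intros; ring. }
   rewrite rsum_swap. apply rsum_ext. intros k Hk.
   rewrite (rsum_ext n _ (fun i => (gam src dst B (V t) k * sin (eta t k) - gam src dst B Vb k * sin (etab k)) * (inc src dst i k * (w t i - wb i)))) by (intros; ring).
   rewrite rsum_scal. pose proof (Heq1 k Hk). unfold DT in *.
   rewrite (rsum_ext n (fun i => inc src dst i k * (w t i - wb i)) (fun i => inc src dst i k * w t i - inc src dst i k * wb i)) by (intros; ring).
   rewrite rsum_minus. rewrite H. ring. }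
 assert (K2 := EV_bil n m src dst Hedge B Xd Xd' (eta t) Vd (V t) HBs).
 fold F in K2.
 assert (E5 : rsum n (fun i => Vd i * EV n m src dst B Xd Xd' (eta t) (V t) i) - rsum n (fun i => Efd i * Vd i) =
   - rsum n (fun i => gradVW2 n m src dst B Xd Xd' Efd (eta t) (V t) i * / Ti i * gradVW2 n m src dst B Xd Xd' Efd (eta t) (V t) i)).
 { rewrite <- rsum_minus. rewrite <- (Rmult_1_l (rsum n (fun i => gradVW2 _ _ _ _ _ _ _ _ _ _ i * _ * _))).
   rewrite Ropp_mult_distr_l, <- rsum_scal. apply rsum_ext. intros i Hi. unfold Vd, gradVW2. ring. }
 assert (E6 : rsum n (fun i => 2 * (F i * Vd i * V t i)) = 2 * rsum n (fun i => F i * Vd i * V t i)) by apply rsum_scal.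
 rewrite E1, E2, E6. lra.
Qed.

Definition qf n (Q : nat -> nat -> R) (x : nat -> R) := rsum n (fun i => rsum n (fun j => x i * Q i j * x j)).
Definition dot n (x y : nat -> R) := rsum n (fun i => x i * y i).

Lemma amgm r p q : 0 <= p -> 0 <= q -> r*r <= p*q -> 2*r <= p+q.
Proof. intros. destruct (Rle_dec (2*r) (p+q)); auto.
 apply Rnot_le_lt in n. assert (0 < 2*r - (p+q)) by lra. assert (0 < 2*r + (p+q)) by lra. assert (0 < (2*r - (p+q))*(2*r+(p+q))) by (apply Rmult_lt_0_compat; lra). assert ((p-q)*(p-q) >= 0) by (apply Rle_ge; apply Rle_0_sqr). assert (E: (2*r - (p+q))*(2*r+(p+q)) = 4*(r*r) - p*p - 2*(p*q) - q*q) by ring. assert (E2: (p-q)*(p-q) = p*p - 2*(p*q) + q*q) by ring. lra. Qed.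

Lemma CS n b y : dot n b y * dot n b y <= dot n b b * dot n y y.
Proof. unfold dot. induction n; simpl; [lra|].
 set (P := rsum n (fun i => b i * y i)) in *. set (S1 := rsum n (fun i => b i * b i)) in *.
 set (S2 := rsum n (fun i => y i * y i)) in *.
 assert (0 <= S1) by (apply rsum_nonneg; intros; nra). assert (0 <= S2) by (apply rsum_nonneg; intros; nra).
 set (bb := b n) in *. set (yy := y n) in *.
 assert (H1 : (P*bb*yy)*(P*bb*yy) <= (S1*yy*yy)*(bb*bb*S2)).
 { assert (0 <= bb*bb*yy*yy) by nra.
   replace ((P*bb*yy)*(P*bb*yy)) with ((P*P)*(bb*bb*yy*yy)) by ring.
   replace ((S1*yy*yy)*(bb*bb*S2)) with ((S1*S2)*(bb*bb*yy*yy)) by ring. nra. }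
 assert (0 <= S1*yy*yy) by nra. assert (0 <= bb*bb*S2) by nra.
 pose proof (amgm _ _ _ H2 H3 H1).
 nra.
Qed.

Lemma qf_S n Q x : qf (S n) Q x = qf n Q x + x n * rsum n (fun j => (Q n j + Q j n) * x j) + Q n n * x n * x n.
Proof. unfold qf. simpl. rewrite rsum_plus.
 assert (x n * rsum n (fun j => (Q n j + Q j n) * x j) = rsum n (fun i => x i * Q i n * x n) + rsum n (fun j => x n * Q n j * x j)).
 { rewrite <- rsum_scal, <- rsum_plus. apply rsum_ext; intros; ring. }
 rewrite H. ring.
Qed.

Lemma qf_ext n Q x y : (forall i, (i < n)%nat -> x i = y i) -> qf n Q x = qf n Q y.
Proof. intros H. unfold qf. apply rsum_ext. intros i Hi. apply rsum_ext. intros j Hj. rewrite !H by auto. auto. Qed.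

Lemma qf_rank1 n (b y : nat -> R) : rsum n (fun i => rsum n (fun j => y i * (b i * b j) * y j)) = dot n b y * dot n b y.
Proof. unfold dot. rewrite <- rsum_scal. apply rsum_ext. intros i Hi. rewrite (Rmult_comm (rsum n _)), <- rsum_scal.
 apply rsum_ext. intros; ring. Qed.

Lemma pd_unif n : forall Q, pos_def n Q -> exists c, c > 0 /\ forall x, qf n Q x >= c * dot n x x.
Proof. induction n; intros Q HQ.
 - exists 1. split; [lra|]. intros x. unfold qf, dot. simpl. lra.
 - set (a := Q n n).
   assert (Ha : a > 0).
   { assert (H0 : exists i, (i < S n)%nat /\ (fun i => if Nat.eqb i n then 1 else 0) i <> 0).
     { exists n. split; [lia|]. simpl. rewrite Nat.eqb_refl. lra. }
     assert (H : qf (S n) Q (fun i => if Nat.eqb i n then 1 else 0) > 0) by exact (HQ _ H0).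
     rewrite qf_S in H. rewrite Nat.eqb_refl in H.
     rewrite (qf_ext n Q _ (fun _ => 0)) in H.
     2:{ intros i Hi. destruct (Nat.eqb_spec i n); [lia|auto]. }
     rewrite (rsum_zero n (fun j => (Q n j + Q j n) * _)) in H.
     2:{ intros i Hi. destruct (Nat.eqb_spec i n); [lia|ring]. }
     unfold qf in H. rewrite rsum_zero in H. 2:{ intros; apply rsum_zero; intros; ring. }
     unfold a. lra. }
   set (b := fun j => (Q n j + Q j n) / 2).
   set (Q' := fun i j => Q i j - b i * b j / a).
   assert (HQ'e : forall y, qf n Q' y = qf n Q y - dot n b y * dot n b y / a).
   { intros y. unfold qf, Q'. rewrite <- qf_rank1. unfold Rdiv. rewrite Rmult_comm, <- rsum_scal, <- rsum_minus.
     apply rsum_ext. intros i Hi. rewrite <- rsum_scal, <- rsum_minus. apply rsum_ext. intros. field. lra. }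
   assert (Hfull : forall x, qf (S n) Q x = qf n Q' x + a * (x n + dot n b x / a) * (x n + dot n b x / a)).
   { intros x. rewrite qf_S, HQ'e. fold a.
     assert (rsum n (fun j => (Q n j + Q j n) * x j) = 2 * dot n b x).
     { unfold dot. rewrite <- rsum_scal. apply rsum_ext. intros. unfold b. field. }
     rewrite H. field. lra. }
   assert (HQ' : pos_def n Q').
   { intros y [i [Hi Hy]].
     set (x := fun j => if Nat.ltb j n then y j else - (dot n b y / a)).
     assert (Hxy : forall j, (j < n)%nat -> x j = y j). { intros j Hj. unfold x. rewrite (proj2 (Nat.ltb_lt j n) Hj). auto. }
     assert (Hxn : x n = - (dot n b y / a)). { unfold x. rewrite Nat.ltb_irrefl. auto. }
     assert (Hd : dot n b x = dot n b y). { unfold dot. apply rsum_ext. intros. rewrite Hxy; auto. }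
     assert (H0 : exists i, (i < S n)%nat /\ x i <> 0). { exists i. split; [lia|]. rewrite Hxy; auto. }
     assert (H : qf (S n) Q x > 0) by exact (HQ x H0). rewrite Hfull, Hxn, Hd, (qf_ext n Q' x y Hxy) in H.
     change (qf n Q' y > 0). replace (- (dot n b y / a) + dot n b y / a) with 0 in H by ring. lra. }
   destruct (IHn Q' HQ') as [c [Hc Hcx]].
   set (Bs := dot n b b).
   assert (HBs : 0 <= Bs) by (apply rsum_nonneg; intros; nra).
   set (K := (1 + 2 * Bs / (a * a)) / c + 2 / a).
   assert (HK1 : 0 <= (1 + 2 * Bs / (a * a)) / c).
   { apply Rmult_le_pos; [|left; apply Rinv_0_lt_compat; lra]. assert (0 <= 2 * Bs / (a*a)).
     { apply Rmult_le_pos; [lra|left; apply Rinv_0_lt_compat; nra]. } lra. }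
   assert (HK2 : 0 < 2 / a) by (apply Rmult_lt_0_compat; [lra|apply Rinv_0_lt_compat; lra]).
   assert (HK : K > 0) by (unfold K; lra).
   exists (/ K). split; [apply Rinv_0_lt_compat; lra|].
   intros x. rewrite Hfull. specialize (Hcx x).
   set (S0 := dot n x x). set (z := x n + dot n b x / a).
   assert (HS0 : 0 <= S0) by (apply rsum_nonneg; intros; nra).
   assert (Hdot : dot n b x * dot n b x <= Bs * S0) by apply CS.
   assert (Hxn : x n * x n <= 2 * (z * z) + 2 * (Bs * S0) / (a * a)).
   { assert (x n = z - dot n b x / a) by (unfold z; ring). rewrite H.
     assert ((dot n b x / a) * (dot n b x / a) <= Bs * S0 / (a * a)).
     { replace ((dot n b x / a) * (dot n b x / a)) with ((dot n b x * dot n b x) / (a*a)) by (field; lra).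
       apply Rmult_le_compat_r; [left; apply Rinv_0_lt_compat; nra|auto]. }
     set (e := dot n b x / a) in *. assert ((z-e)*(z-e) <= 2*(z*z) + 2*(e*e)) by (pose proof (Rle_0_sqr (z+e)); unfold Rsqr in *; nra). assert (2 * (Bs * S0) / (a * a) = 2 * (Bs * S0 / (a * a))) by (unfold Rdiv; ring). lra. }
   assert (Hdd : dot (S n) x x = S0 + x n * x n) by (unfold dot, S0; simpl; auto).
   rewrite Hdd.
   assert (Hinv : / K * K = 1) by (field; lra).
   assert (0 < / K) by (apply Rinv_0_lt_compat; lra).
   unfold K in Hinv. rewrite Rmult_plus_distr_l in Hinv. fold K in Hinv.
   assert (0 <= /K * (2/a)) by (apply Rmult_le_pos; lra).
   assert (0 <= /K * ((1 + 2 * Bs / (a * a)) / c)) by (apply Rmult_le_pos; lra).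
   assert (/K * ((1 + 2 * Bs / (a * a)) / c) <= 1) by lra.
   assert (/K * (2 / a) <= 1) by lra.
   assert (A1 : /K * (1 + 2 * Bs / (a*a)) <= c).
   { replace (/K * (1 + 2 * Bs / (a*a))) with (/K * ((1 + 2 * Bs / (a * a)) / c) * c) by (field; lra). nra. }
   assert (A2 : /K * 2 <= a).
   { replace (/K * 2) with (/K * (2 / a) * a) by (field; lra). nra. }
   assert (HH : / K * (S0 + x n * x n) <= /K * (S0 + 2 * (z * z) + 2 * (Bs * S0) / (a * a))) by nra.
   replace (/K * (S0 + 2 * (z * z) + 2 * (Bs * S0) / (a * a))) with (/K * (1 + 2 * Bs / (a*a)) * S0 + /K * 2 * (z*z)) in HH by (field; lra).
   assert (/K * (1 + 2 * Bs / (a*a)) * S0 <= c * S0) by nra.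
   assert (/K * 2 * (z*z) <= a * (z * z)) by nra.
   replace (a * z * z) with (a * (z*z)) by ring.
   apply Rle_ge. eapply Rle_trans; [apply HH|]. apply Rplus_le_compat; [|exact H5]. eapply Rle_trans; [apply H4|]. apply Rge_le. exact Hcx.
Qed.

Lemma abs_lin c a : Rabs c <= 1 -> Rabs (c * a) <= Rabs a.
Proof. intros H. rewrite Rabs_mult. pose proof (Rabs_pos a). pose proof (Rabs_pos c). nra. Qed.
Lemma cos_abs x : Rabs (cos x) <= 1.
Proof. apply Rabs_le. pose proof (COS_bound x). lra. Qed.
Lemma sin_abs x : Rabs (sin x) <= 1.
Proof. apply Rabs_le. pose proof (SIN_bound x). lra. Qed.
Lemma sq_abs x : x * x = Rabs x * Rabs x.
Proof. rewrite <- Rabs_mult. rewrite Rabs_right; auto. apply Rle_ge. apply Rle_0_sqr. Qed.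

Definition Gedge (Vs Vd Bk eb e vs vd : R) : R :=
  let gb := Vs * Vd * Bk in
  gb * (cos eb - cos e - sin eb * (e - eb)) + Bk * (Vs * vd + Vd * vs) * (cos eb - cos e)
  - Bk * vs * vd * cos e + Bk * cos eb * vs * vd
  + / 2 * (gb * sin eb * / cos eb * sin eb) * ((vs / Vs + vd / Vd) * (vs / Vs + vd / Vd)).

Definition Kedge (Vs Vd Bk : R) := Vs * Vd * Bk + 2 * Bk * (Vs + Vd) + Bk.
Definition Ledge (Vs Vd eb : R) := 4 * (sin eb / cos eb) * (sin eb / cos eb) * (/ (Vs * Vs) + / (Vd * Vd)).
Definition Aedge (Vs Vd Bk eb : R) := Vs * Vd * Bk * cos eb.

Lemma edge_bound Vs Vd Bk eb e vs vd eps mu :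
  Vs > 0 -> Vd > 0 -> Bk > 0 -> cos eb > 0 -> mu > 0 ->
  Rabs (e - eb) <= eps -> Rabs vs <= eps -> Rabs vd <= eps -> eps <= 1 -> 0 <= eps ->
  eps * (4 * Kedge Vs Vd Bk / Aedge Vs Vd Bk eb + Kedge Vs Vd Bk * (Ledge Vs Vd eb + 1) / mu) <= 1 ->
  Gedge Vs Vd Bk eb e vs vd >= - mu * (vs * vs + vd * vd).
Proof.
 intros HVs HVd HB Hc Hmu Hd Hvs Hvd He1 He0 Heps.
 set (d := e - eb) in *. assert (Ee : e = eb + d) by (unfold d; ring).
 set (cb := cos eb) in *. set (sb := sin eb) in *.
 set (gb := Vs * Vd * Bk).
 assert (Hgb : gb > 0) by (unfold gb; apply Rmult_lt_0_compat; [apply Rmult_lt_0_compat|]; lra).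
 set (p := vs / Vs + vd / Vd).
 set (z := d + sb * p / cb).
 set (A1 := 1 - cos d - d * d / 2). set (B1 := sin d - d).
 set (R1 := gb * (cb * A1 + sb * B1)).
 set (R2 := Bk * (Vs * vd + Vd * vs) * (cb * (1 - cos d) + sb * B1)).
 set (R3 := - (Bk * vs * vd * (cos e - cb))).
 assert (HG : Gedge Vs Vd Bk eb e vs vd = / 2 * (gb * cb) * (z * z) + R1 + R2 + R3).
 { unfold Gedge. fold cb sb gb. fold d. fold p.
   unfold R1, R2, R3, z, A1, B1. rewrite Ee, cos_plus. fold cb sb.
   unfold p, gb. field. repeat split; lra. }
 rewrite HG.
 assert (Hd1 : Rabs d <= 1) by lra.
 destruct (trig_bounds d Hd1) as [T1 [T2 T3]]. fold A1 B1 in T1.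
 assert (Hcb1 : Rabs cb <= 1) by apply cos_abs. assert (Hsb1 : Rabs sb <= 1) by apply sin_abs.
 assert (Had : 0 <= Rabs d) by apply Rabs_pos.
 assert (Hdd : d * d = Rabs d * Rabs d) by apply sq_abs.
 assert (HR1 : R1 >= - (gb * eps * (d * d))).
 { assert (X : Rabs (cb * A1 + sb * B1) <= eps * (d * d)).
   { eapply Rle_trans; [apply Rabs_triang|].
     pose proof (abs_lin cb A1 Hcb1). pose proof (abs_lin sb B1 Hsb1).
     assert (Rabs d * (d * d) <= eps * (d * d)) by (apply Rmult_le_compat_r; nra). lra. }
   apply Rabs_le_inv2 in X. unfold R1. nra. }
 assert (HR2 : R2 >= - (2 * Bk * (Vs + Vd) * eps * (d * d))).
 { assert (X : Rabs (cb * (1 - cos d) + sb * B1) <= 2 * (d * d)).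
   { eapply Rle_trans; [apply Rabs_triang|].
     pose proof (abs_lin cb (1 - cos d) Hcb1). pose proof (abs_lin sb B1 Hsb1).
     assert (Rabs B1 <= d * d).
     { assert (Rabs A1 >= 0) by (apply Rle_ge, Rabs_pos). assert (Rabs d * (d*d) <= d * d) by nra. lra. }
     lra. }
   assert (Y : Rabs (Bk * (Vs * vd + Vd * vs)) <= Bk * (Vs + Vd) * eps).
   { rewrite Rabs_mult, (Rabs_right Bk) by lra.
     assert (Rabs (Vs * vd + Vd * vs) <= (Vs + Vd) * eps).
     { eapply Rle_trans; [apply Rabs_triang|]. rewrite !Rabs_mult, (Rabs_right Vs), (Rabs_right Vd) by lra. nra. }
     nra. }
   assert (Rabs R2 <= Bk * (Vs + Vd) * eps * (2 * (d * d))).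
   { unfold R2. rewrite Rabs_mult. apply Rmult_le_compat; auto using Rabs_pos. }
   apply Rabs_le_inv2 in H. lra. }
 assert (HR3 : R3 >= - (Bk * eps * (vs * vs + vd * vd))).
 { assert (X : Rabs (cos e - cb) <= 2 * eps).
   { rewrite Ee, cos_plus. fold cb sb.
     replace (cb * cos d - sb * sin d - cb) with (- (cb * (1 - cos d)) - sb * sin d) by ring.
     eapply Rle_trans; [apply Rabs_triang|]. rewrite Rabs_Ropp, Rabs_Ropp.
     pose proof (abs_lin cb (1 - cos d) Hcb1). pose proof (abs_lin sb (sin d) Hsb1).
     assert (d * d <= eps) by nra. lra. }
   assert (Y : Rabs (vs * vd) <= / 2 * (vs * vs + vd * vd)).
   { rewrite Rabs_mult, (sq_abs vs), (sq_abs vd). pose proof (Rle_0_sqr (Rabs vs - Rabs vd)). unfold Rsqr in *. nra. }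
   assert (Rabs (Bk * vs * vd * (cos e - cb)) <= Bk * (/ 2 * (vs * vs + vd * vd)) * (2 * eps)).
   { rewrite Rabs_mult, Rmult_assoc, Rabs_mult, (Rabs_right Bk) by lra.
     apply Rmult_le_compat; auto using Rabs_pos. apply Rmult_le_pos; [lra|apply Rabs_pos]. apply Rmult_le_compat_l; lra. }
   apply Rabs_le_inv2 in H. unfold R3. lra. }
 set (K := Kedge Vs Vd Bk). set (L := Ledge Vs Vd eb). set (a := Aedge Vs Vd Bk eb).
 set (W := vs * vs + vd * vd).
 assert (HW : 0 <= W) by (unfold W; nra).
 assert (Ha : a > 0) by (unfold a, Aedge; fold gb; fold cb; nra).
 assert (HK : K >= gb + 2 * Bk * (Vs + Vd) + Bk) by (unfold K, Kedge; fold gb; lra).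
 assert (HK0 : 0 <= gb) by lra.
 assert (HL0 : 0 <= L).
 { unfold L, Ledge. fold sb cb. assert (0 <= / (Vs * Vs)) by (left; apply Rinv_0_lt_compat; nra).
   assert (0 <= / (Vd * Vd)) by (left; apply Rinv_0_lt_compat; nra).
   assert (0 <= (sb / cb) * (sb / cb)) by nra. nra. }
 assert (HRsum : R1 + R2 + R3 >= - (eps * K * (d * d + W))).
 { assert (0 <= d * d) by nra.
   assert (eps * (gb * (d*d)) + eps * (2 * Bk * (Vs + Vd) * (d*d)) + eps * (Bk * W) <= eps * K * (d * d + W)).
   { assert (0 <= Bk * (Vs+Vd)) by nra.
     assert (gb * (d*d) + 2 * Bk * (Vs + Vd) * (d*d) + Bk * W <= K * (d*d + W)).
     { assert (K - gb - 2 * Bk * (Vs + Vd) - Bk >= 0) by lra.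
       assert (K * (d*d + W) - (gb * (d*d) + 2 * Bk * (Vs + Vd) * (d*d) + Bk * W) =
         (K - gb - 2 * Bk * (Vs + Vd) - Bk) * (d*d+W) + (gb + 2 * Bk * (Vs + Vd)) * W + Bk * (d * d)) by ring.
       assert (0 <= (K - gb - 2 * Bk * (Vs + Vd) - Bk) * (d*d+W)) by nra.
       assert (0 <= (gb + 2 * Bk * (Vs + Vd)) * W) by nra.
       assert (0 <= Bk * (d * d)) by nra. lra. }
     replace (eps * (gb * (d*d)) + eps * (2 * Bk * (Vs + Vd) * (d*d)) + eps * (Bk * W)) with
       (eps * (gb * (d*d) + 2 * Bk * (Vs + Vd) * (d*d) + Bk * W)) by ring.
     replace (eps * K * (d * d + W)) with (eps * (K * (d * d + W))) by ring.
     apply Rmult_le_compat_l; lra. }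
   fold W in HR3.
   replace (gb * eps * (d * d)) with (eps * (gb * (d*d))) in HR1 by ring.
   replace (2 * Bk * (Vs + Vd) * eps * (d * d)) with (eps * (2 * Bk * (Vs + Vd) * (d*d))) in HR2 by ring.
   replace (Bk * eps * W) with (eps * (Bk * W)) in HR3 by ring.
   lra. }
 assert (Hdz : d * d <= 2 * (z * z) + L * W).
 { assert (Ed : d = z - sb * p / cb) by (unfold z; ring).
   set (q := sb * p / cb) in *.
   assert (d * d <= 2 * (z * z) + 2 * (q * q)) by (rewrite Ed; pose proof (Rle_0_sqr (z + q)); unfold Rsqr in *; nra).
   assert (Hq : q * q = (sb / cb) * (sb / cb) * (p * p)) by (unfold q; field; lra).
   assert (Hp : p * p <= 2 * ((vs / Vs) * (vs / Vs) + (vd / Vd) * (vd / Vd))).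
   { unfold p. pose proof (Rle_0_sqr (vs / Vs - vd / Vd)). unfold Rsqr in *. nra. }
   assert (Hp2 : (vs / Vs) * (vs / Vs) + (vd / Vd) * (vd / Vd) <= (/ (Vs * Vs) + / (Vd * Vd)) * W).
   { assert ((vs / Vs) * (vs / Vs) = / (Vs * Vs) * (vs * vs)) by (field; lra).
     assert ((vd / Vd) * (vd / Vd) = / (Vd * Vd) * (vd * vd)) by (field; lra).
     assert (0 <= / (Vs * Vs)) by (left; apply Rinv_0_lt_compat; nra).
     assert (0 <= / (Vd * Vd)) by (left; apply Rinv_0_lt_compat; nra).
     unfold W. assert (0 <= vs*vs) by nra. assert (0 <= vd * vd) by nra. nra. }
   assert (0 <= (sb / cb) * (sb / cb)) by nra.
   assert (q * q <= (sb / cb) * (sb / cb) * (2 * ((/ (Vs * Vs) + / (Vd * Vd)) * W))).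
   { rewrite Hq. apply Rmult_le_compat_l; lra. }
   unfold L, Ledge. fold sb cb. nra. }
 assert (HKp : 0 <= K) by (assert (0 <= Bk * (Vs + Vd)) by nra; lra).
 assert (Ht1 : 0 <= eps * (4 * K / a)) by (apply Rmult_le_pos; [lra|]; apply Rmult_le_pos; [lra|left; apply Rinv_0_lt_compat; lra]).
 assert (Ht2 : 0 <= eps * (K * (L + 1) / mu)) by (apply Rmult_le_pos; [lra|]; apply Rmult_le_pos; [nra|left; apply Rinv_0_lt_compat; lra]).
 fold K L a in Heps. rewrite Rmult_plus_distr_l in Heps.
 assert (C1 : 4 * (eps * K) <= a).
 { assert (eps * (4 * K / a) <= 1) by lra. replace (4 * (eps * K)) with (eps * (4 * K / a) * a) by (field; lra). nra. }
 assert (C2 : eps * K * (L + 1) <= mu).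
 { assert (eps * (K * (L + 1) / mu) <= 1) by lra. replace (eps * K * (L + 1)) with (eps * (K * (L + 1) / mu) * mu) by (field; lra). nra. }
 assert (HepsK : 0 <= eps * K) by nra.
 assert (eps * K * (d * d + W) <= eps * K * (2 * (z * z)) + eps * K * (L + 1) * W).
 { replace (eps * K * (2 * (z * z)) + eps * K * (L + 1) * W) with (eps * K * (2 * (z * z) + L * W + W)) by ring.
   apply Rmult_le_compat_l; lra. }
 assert (eps * K * (L + 1) * W <= mu * W) by (apply Rmult_le_compat_r; lra).
 assert (0 <= z * z) by nra.
 assert (eps * K * (2 * (z * z)) <= / 2 * a * (z * z)) by nra.
 assert (Ha2 : a = gb * cb) by (unfold a, Aedge, gb, cb; ring). rewrite Ha2 in *.
 replace (- mu * (vs * vs + vd * vd)) with (- (mu * W)) by (unfold W; ring).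
 lra.
Qed.

Lemma rsum_opp n f : rsum n (fun i => - f i) = - rsum n f.
Proof. induction n; simpl; [lra|rewrite IHn; lra]. Qed.

Lemma W2_split n m src dst B Xd Xd' Efd eta etab V Vb
  (Hedge : forall k, (k < m)%nat -> (src k < n)%nat /\ (dst k < n)%nat /\ src k <> dst k)
  (HBs : forall k, (k < m)%nat -> B (src k) (dst k) = B (dst k) (src k))
  (HVb : forall i, (i < n)%nat -> Vb i > 0)
  (Hc : forall k, (k < m)%nat -> cos (etab k) > 0)
  (Heq3 : forall i, (i < n)%nat -> 0 = - EV n m src dst B Xd Xd' etab Vb i + Efd i) :
  W2 n m src dst B Xd Xd' Efd eta etab V Vb = / 2 * qf n (condQ n m src dst B Xd Xd' etab Vb) (fun i => V i - Vb i)
   + rsum m (fun k => Gedge (Vb (src k)) (Vb (dst k)) (B (src k) (dst k)) (etab k) (eta k) (V (src k) - Vb (src k)) (V (dst k) - Vb (dst k))).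
Proof.
 set (F := Fdiag B Xd Xd').
 assert (F2 : qf n (condQ n m src dst B Xd Xd' etab Vb) (fun i => V i - Vb i) =
   rsum n (fun i => F i * (V i - Vb i) * (V i - Vb i))
   - rsum m (fun k => B (src k) (dst k) * cos (etab k) * ((V (src k) - Vb (src k)) * (V (dst k) - Vb (dst k)) + (V (dst k) - Vb (dst k)) * (V (src k) - Vb (src k))))
   - rsum m (fun k => gam src dst B Vb k * sin (etab k) * / cos (etab k) * sin (etab k) *
        (((V (src k) - Vb (src k)) / Vb (src k) + (V (dst k) - Vb (dst k)) / Vb (dst k)) *
         ((V (src k) - Vb (src k)) / Vb (src k) + (V (dst k) - Vb (dst k)) / Vb (dst k))))).
 { unfold qf, condQ.
   rewrite (rsum_ext n _ (fun i => (V i - Vb i) * EV n m src dst B Xd Xd' etab (fun i => V i - Vb i) i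
      - rsum m (fun k => rsum n (fun j => (absinc src dst i k * ((V i - Vb i) / Vb i)) *
          ((gam src dst B Vb k * sin (etab k) * / cos (etab k) * sin (etab k)) * (absinc src dst j k * ((V j - Vb j) / Vb j))))))).
   2:{ intros i Hi. rewrite rsum_swap. unfold EV. rewrite <- rsum_scal, <- rsum_minus. apply rsum_ext. intros j Hj.
       assert (E : (V i - Vb i) * (/ Vb i * rsum m (fun k => absinc src dst i k * gam src dst B Vb k * sin (etab k) * / cos (etab k) * sin (etab k) * absinc src dst j k) * / Vb j) * (V j - Vb j)
         = rsum m (fun k => absinc src dst i k * ((V i - Vb i) / Vb i) * (gam src dst B Vb k * sin (etab k) * / cos (etab k) * sin (etab k) * (absinc src dst j k * ((V j - Vb j) / Vb j))))).
       { rewrite <- (Rmult_1_l (rsum m (fun k => absinc src dst i k * ((V i - Vb i) / Vb i) * _))).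
         replace ((V i - Vb i) * (/ Vb i * rsum m (fun k => absinc src dst i k * gam src dst B Vb k * sin (etab k) * / cos (etab k) * sin (etab k) * absinc src dst j k) * / Vb j) * (V j - Vb j))
           with (((V i - Vb i) / Vb i * ((V j - Vb j) / Vb j)) * rsum m (fun k => absinc src dst i k * gam src dst B Vb k * sin (etab k) * / cos (etab k) * sin (etab k) * absinc src dst j k)) by (unfold Rdiv; ring).
         rewrite <- !rsum_scal. apply rsum_ext. intros; unfold Rdiv; ring. }
       rewrite <- E. ring. }
   rewrite rsum_minus. rewrite (EV_bil n m src dst Hedge B Xd Xd' etab (fun i => V i - Vb i) (fun i => V i - Vb i) HBs).
   rewrite rsum_swap. fold F.
   rewrite (rsum_ext m (fun k => rsum n _) (fun k => gam src dst B Vb k * sin (etab k) * / cos (etab k) * sin (etab k) *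
        (((V (src k) - Vb (src k)) / Vb (src k) + (V (dst k) - Vb (dst k)) / Vb (dst k)) *
         ((V (src k) - Vb (src k)) / Vb (src k) + (V (dst k) - Vb (dst k)) / Vb (dst k))))).
   - auto.
   - intros k Hk. rewrite (rsum_ext n _ (fun i => (gam src dst B Vb k * sin (etab k) * / cos (etab k) * sin (etab k) * rsum n (fun j => absinc src dst j k * ((V j - Vb j) / Vb j))) * (absinc src dst i k * ((V i - Vb i) / Vb i)))).
     2:{ intros i Hi. rewrite <- !rsum_scal. rewrite (Rmult_comm (rsum n _)), <- rsum_scal. apply rsum_ext. intros; ring. }
     rewrite rsum_scal, !(absinc_sum n m src dst Hedge k (fun j => (V j - Vb j) / Vb j) Hk). ring. }
 assert (F1 : rsum n (fun i => Efd i * (V i - Vb i)) =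
   rsum n (fun i => F i * (V i - Vb i) * Vb i)
   - rsum m (fun k => B (src k) (dst k) * cos (etab k) * ((V (src k) - Vb (src k)) * Vb (dst k) + (V (dst k) - Vb (dst k)) * Vb (src k)))).
 { transitivity (rsum n (fun i => (V i - Vb i) * EV n m src dst B Xd Xd' etab Vb i)).
   - apply rsum_ext. intros i Hi. pose proof (Heq3 i Hi). rewrite (Rmult_comm (V i - Vb i)). f_equal. lra.
   - rewrite (EV_bil n m src dst Hedge B Xd Xd' etab (fun i => V i - Vb i) Vb HBs). auto. }
 assert (FN : rsum n (fun i => F i * V i * V i) - rsum n (fun i => F i * Vb i * Vb i) - 2 * rsum n (fun i => F i * (V i - Vb i) * Vb i)
    = rsum n (fun i => F i * (V i - Vb i) * (V i - Vb i))).
 { rewrite <- rsum_scal, <- !rsum_minus. apply rsum_ext. intros; ring. }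
 assert (FE : rsum m (fun k => - (gam src dst B V k * cos (eta k)) + gam src dst B Vb k * cos (etab k)
     - gam src dst B Vb k * sin (etab k) * (eta k - etab k)
     + B (src k) (dst k) * cos (etab k) * ((V (src k) - Vb (src k)) * Vb (dst k) + (V (dst k) - Vb (dst k)) * Vb (src k))
     + / 2 * (B (src k) (dst k) * cos (etab k) * ((V (src k) - Vb (src k)) * (V (dst k) - Vb (dst k)) + (V (dst k) - Vb (dst k)) * (V (src k) - Vb (src k))))
     + / 2 * (gam src dst B Vb k * sin (etab k) * / cos (etab k) * sin (etab k) *
        (((V (src k) - Vb (src k)) / Vb (src k) + (V (dst k) - Vb (dst k)) / Vb (dst k)) *
         ((V (src k) - Vb (src k)) / Vb (src k) + (V (dst k) - Vb (dst k)) / Vb (dst k))))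
     - Gedge (Vb (src k)) (Vb (dst k)) (B (src k) (dst k)) (etab k) (eta k) (V (src k) - Vb (src k)) (V (dst k) - Vb (dst k))) = 0).
 { apply rsum_zero. intros k Hk. destruct (Hedge k Hk) as [Hs [Hd _]].
   pose proof (HVb _ Hs). pose proof (HVb _ Hd). pose proof (Hc k Hk).
   unfold Gedge, gam. field. repeat split; lra. }
 rewrite !rsum_minus, !rsum_plus, !rsum_minus, !rsum_plus, !rsum_scal, rsum_opp in FE.
 unfold W2. fold F. rewrite F2. lra.
Qed.

Lemma rsum_const n c : rsum n (fun _ => c) = INR n * c.
Proof. induction n; simpl rsum; [simpl; lra|]. rewrite IHn, S_INR. ring. Qed.

Lemma edge_X_nonneg Vs Vd Bk eb mu : Vs > 0 -> Vd > 0 -> Bk > 0 -> cos eb > 0 -> mu > 0 ->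
  0 <= 4 * Kedge Vs Vd Bk / Aedge Vs Vd Bk eb + Kedge Vs Vd Bk * (Ledge Vs Vd eb + 1) / mu.
Proof. intros. unfold Kedge, Aedge, Ledge.
 assert (0 < Vs * Vd * Bk) by (apply Rmult_lt_0_compat; [apply Rmult_lt_0_compat|]; lra).
 assert (0 < Vs * Vd * Bk * cos eb) by (apply Rmult_lt_0_compat; lra).
 assert (0 <= / (Vs * Vs)) by (left; apply Rinv_0_lt_compat; nra).
 assert (0 <= / (Vd * Vd)) by (left; apply Rinv_0_lt_compat; nra).
 assert (0 <= (sin eb / cos eb) * (sin eb / cos eb)) by nra.
 assert (0 <= Bk * (Vs + Vd)) by nra.
 set (K := Vs * Vd * Bk + 2 * Bk * (Vs + Vd) + Bk).
 assert (0 < K) by (unfold K; lra).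
 set (L := 4 * (sin eb / cos eb) * (sin eb / cos eb) * (/ (Vs * Vs) + / (Vd * Vd))).
 assert (0 <= L) by (unfold L; nra).
 assert (0 <= 4 * K / (Vs * Vd * Bk * cos eb)) by (apply Rmult_le_pos; [lra|left; apply Rinv_0_lt_compat; lra]).
 assert (0 <= K * (L + 1) / mu) by (apply Rmult_le_pos; [nra|left; apply Rinv_0_lt_compat; lra]).
 lra.
Qed.

Lemma part1 (n m : nat) (src dst : nat -> nat)
  (B : nat -> nat -> R) (Xd Xd' : nat -> R) (Mi : nat -> R) (Efd : nat -> R)
  (etab wb Vb : nat -> R)
  (Hedge : forall k, (k < m)%nat -> (src k < n)%nat /\ (dst k < n)%nat /\ src k <> dst k)
  (HBs : forall k, (k < m)%nat -> B (src k) (dst k) = B (dst k) (src k))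
  (HBp : forall k, (k < m)%nat -> B (src k) (dst k) > 0)
  (HM : forall i, (i < n)%nat -> Mi i > 0)
  (Hetab : forall k, (k < m)%nat -> - (PI / 2) < etab k < PI / 2)
  (HVb : forall i, (i < n)%nat -> Vb i > 0)
  (Heq3 : forall i, (i < n)%nat -> 0 = - EV n m src dst B Xd Xd' etab Vb i + Efd i)
  (Hast : pos_def n (condQ n m src dst B Xd Xd' etab Vb)) :
  exists eps, eps > 0 /\
     forall eta w V : nat -> R,
       (forall k, (k < m)%nat -> Rabs (eta k - etab k) < eps) ->
       (forall i, (i < n)%nat -> Rabs (w i - wb i) < eps /\ Rabs (V i - Vb i) < eps) ->
       W1 n Mi w wb + W2 n m src dst B Xd Xd' Efd eta etab V Vb >= 0.
Proof.
 destruct (pd_unif n _ Hast) as [c1 [Hc1 Hq]].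
 assert (Hm0 : 0 <= INR m) by apply pos_INR.
 set (mu := c1 / (4 * (INR m + 1))).
 assert (Hmu : mu > 0) by (unfold mu; apply Rmult_lt_0_compat; [lra|apply Rinv_0_lt_compat; lra]).
 assert (Hc : forall k, (k < m)%nat -> cos (etab k) > 0) by (intros k Hk; destruct (Hetab k Hk); apply cos_gt_0; lra).
 set (X := fun k => 4 * Kedge (Vb (src k)) (Vb (dst k)) (B (src k) (dst k)) / Aedge (Vb (src k)) (Vb (dst k)) (B (src k) (dst k)) (etab k)
    + Kedge (Vb (src k)) (Vb (dst k)) (B (src k) (dst k)) * (Ledge (Vb (src k)) (Vb (dst k)) (etab k) + 1) / mu).
 assert (HX : forall k, (k < m)%nat -> 0 <= X k).
 { intros k Hk. destruct (Hedge k Hk) as [Hs [Hd _]]. apply edge_X_nonneg; auto. }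
 assert (HS : 0 <= rsum m X) by (apply rsum_nonneg; auto).
 set (eps := / (1 + rsum m X)).
 assert (Heps : eps > 0) by (apply Rinv_0_lt_compat; lra).
 assert (Heps1 : eps * (1 + rsum m X) = 1) by (unfold eps; field; lra).
 assert (He1 : eps <= 1) by nra.
 assert (HeX : forall k, (k < m)%nat -> eps * X k <= 1).
 { intros k Hk. pose proof (term_le_rsum m X k HX Hk). nra. }
 exists eps. split; auto.
 intros eta w V Heta HwV.
 assert (HW1 : W1 n Mi w wb >= 0).
 { unfold W1. apply Rle_ge. apply Rmult_le_pos; [lra|]. apply rsum_nonneg. intros i Hi. pose proof (HM i Hi).
   pose proof (Rle_0_sqr (w i - wb i)). unfold Rsqr in *. rewrite Rmult_assoc. apply Rmult_le_pos; lra. }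
 rewrite (W2_split n m src dst B Xd Xd' Efd eta etab V Vb Hedge HBs HVb Hc Heq3).
 set (v := fun i => V i - Vb i).
 set (D := dot n v v).
 assert (HD : 0 <= D) by (apply rsum_nonneg; intros; nra).
 assert (Hqv : qf n (condQ n m src dst B Xd Xd' etab Vb) v >= c1 * D) by apply Hq.
 assert (HG : rsum m (fun k => - mu * (v (src k) * v (src k) + v (dst k) * v (dst k))) <=
    rsum m (fun k => Gedge (Vb (src k)) (Vb (dst k)) (B (src k) (dst k)) (etab k) (eta k) (V (src k) - Vb (src k)) (V (dst k) - Vb (dst k)))).
 { apply rsum_le. intros k Hk. destruct (Hedge k Hk) as [Hs [Hd _]].
   apply Rge_le. apply (edge_bound _ _ _ _ _ _ _ eps mu); auto; try lra.
   - left; apply Heta; auto.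
   - left; apply HwV; auto.
   - left; apply HwV; auto.
   - apply HeX; auto. }
 assert (HG2 : rsum m (fun k => - mu * (v (src k) * v (src k) + v (dst k) * v (dst k))) >= - (mu * (2 * INR m * D))).
 { rewrite rsum_scal.
   assert (rsum m (fun k => v (src k) * v (src k) + v (dst k) * v (dst k)) <= rsum m (fun _ => 2 * D)).
   { apply rsum_le. intros k Hk. destruct (Hedge k Hk) as [Hs [Hd _]].
     assert (v (src k) * v (src k) <= D) by (apply (term_le_rsum n (fun i => v i * v i)); auto; intros; nra).
     assert (v (dst k) * v (dst k) <= D) by (apply (term_le_rsum n (fun i => v i * v i)); auto; intros; nra).
     lra. }
   rewrite rsum_const in H. nra. }
 assert (Hmu2 : mu * (2 * INR m) <= c1 / 2).
 { unfold mu. replace (c1 / (4 * (INR m + 1)) * (2 * INR m)) with (c1 / 2 * (INR m / (INR m + 1))) by (field; lra).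
   assert (INR m / (INR m + 1) <= 1). { apply (Rmult_le_reg_r (INR m + 1)); [lra|]. unfold Rdiv. rewrite Rmult_assoc, Rinv_l by lra. lra. }
   nra. }
 fold v in HG.
 assert (mu * (2 * INR m * D) <= c1 / 2 * D) by (replace (mu * (2 * INR m * D)) with (mu * (2 * INR m) * D) by ring; apply Rmult_le_compat_r; lra).
 lra.
Qed.

Theorem theorem1
  (n m : nat) (src dst : nat -> nat)
  (B : nat -> nat -> R) (Xd Xd' : nat -> R)
  (Mi Ai Ti : nat -> R) (Efd : nat -> R)
  (ub Pl : nat -> R)
  (etab wb Vb : nat -> R)
  (* standing assumptions *)
  (Hgraph : simple_connected_graph n m src dst)
  (HBedge : forall k, (k < m)%nat ->
     B (src k) (dst k) = B (dst k) (src k) /\ B (src k) (dst k) > 0)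
  (HBii : forall i, (i < n)%nat -> B i i < 0 /\
     Rabs (B i i) > rsum m (fun k => absinc src dst i k * Rabs (B (src k) (dst k))))
  (HX : forall i, (i < n)%nat -> Xd i > Xd' i /\ Xd' i > 0)
  (HM : forall i, (i < n)%nat -> Mi i > 0)
  (HA : forall i, (i < n)%nat -> Ai i > 0)
  (HT : forall i, (i < n)%nat -> Ti i > 0)
  (* the equilibrium *)
  (Hrange : exists z : nat -> R, forall k, (k < m)%nat -> etab k = DT n src dst z k)
  (Hetab : forall k, (k < m)%nat -> - (PI / 2) < etab k < PI / 2)
  (HVb : forall i, (i < n)%nat -> Vb i > 0)
  (Heq1 : forall k, (k < m)%nat -> DT n src dst wb k = 0)
  (Heq2 : forall i, (i < n)%nat ->
     0 = ub i - flow m src dst B Vb etab i - Ai i * wb i - Pl i)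
  (Heq3 : forall i, (i < n)%nat -> 0 = - EV n m src dst B Xd Xd' etab Vb i + Efd i)
  (Hast : pos_def n (condQ n m src dst B Xd Xd' etab Vb)) :
  let U := fun (eta w V : nat -> R) =>
    W1 n Mi w wb + W2 n m src dst B Xd Xd' Efd eta etab V Vb in
  (* U is a storage function: nonnegative near the equilibrium *)
  (exists eps, eps > 0 /\
     forall eta w V : nat -> R,
       (forall k, (k < m)%nat -> Rabs (eta k - etab k) < eps) ->
       (forall i, (i < n)%nat -> Rabs (w i - wb i) < eps /\ Rabs (V i - Vb i) < eps) ->
       U eta w V >= 0) /\
  (* dissipation equality along every solution, for every input u *)
  (forall (a b : R) (u : R -> nat -> R) (eta w V : R -> nat -> R),
     (forall t, a < t < b ->
        (forall k, (k < m)%nat ->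
           derivable_pt_lim (fun s => eta s k) t (DT n src dst (w t) k)) /\
        (forall i, (i < n)%nat ->
           derivable_pt_lim (fun s => w s i) t
             (/ Mi i * (u t i - flow m src dst B (V t) (eta t) i - Ai i * w t i - Pl i))) /\
        (forall i, (i < n)%nat ->
           derivable_pt_lim (fun s => V s i) t
             (/ Ti i * (- EV n m src dst B Xd Xd' (eta t) (V t) i + Efd i)))) ->
     forall t, a < t < b ->
       derivable_pt_lim (fun s => U (eta s) (w s) (V s)) t
         (- rsum n (fun i => Ai i * (w t i - wb i) * (w t i - wb i))
          - rsum n (fun i => gradVW2 n m src dst B Xd Xd' Efd (eta t) (V t) i * / Ti i
                             * gradVW2 n m src dst B Xd Xd' Efd (eta t) (V t) i)
          + rsum n (fun i => (w t i - wb i) * (u t i - ub i)))).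
Proof.
  intros U.
  destruct Hgraph as [Hedge _].
  assert (HBs : forall k, (k < m)%nat -> B (src k) (dst k) = B (dst k) (src k)) by (intros k Hk; apply (HBedge k Hk)).
  assert (HBp : forall k, (k < m)%nat -> B (src k) (dst k) > 0) by (intros k Hk; apply (HBedge k Hk)).
  split.
  - destruct (part1 n m src dst B Xd Xd' Mi Efd etab wb Vb Hedge HBs HBp HM Hetab HVb Heq3 Hast) as [eps [He H]].
    exists eps. split; [auto|]. intros eta w V H1 H2. unfold U. apply H; auto.
  - intros a b u eta w V Hder t Ht. destruct (Hder t Ht) as [He [Hw HV]]. unfold U.
    exact (part2 n m src dst B Xd Xd' Mi Ai Ti Efd ub Pl etab wb Vb Hedge HBs HM HT Heq1 Heq2 u eta w V t He Hw HV).
Qed.
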